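(* Let $\ell$ be a nondegenerate Hermitian form on a complex $n$-dimensional space $W$, $A$ an $\ell$-self-adjoint antilinear operator, and $\lambda^2>0$ an eigenvalue of $A^2$. Let $s_1$ be the least positive integer with $\ker(A^2-\lambda^2I)^{s_1}=\ker(A^2-\lambda^2I)^{n}$. Then there is an $s_1$-dimensional $A$-invariant subspace $V\subset\ker(A^2-\lambda^2I)^n$ on which $\ell$ is nondegenerate, and a basis of $V$ with respect to which $\ell|_V$ and $A|_V$ are represented by $\pm S_{s_1}$ and $J_{|\lambda|,s_1}$ respectively.
   Context: An antilinear operator satisfies $A(zv+w)=\bar zAv+Aw$; $\ell$ is linear in the first argument and conjugate-linear in the second; $A$ is $\ell$-self-adjoint if $\ell(Av,w)=\ell(Aw,v)$. In a basis $e_1,\dots,e_k$, $\ell$ is represented by $H_{i,j}=\ell(e_j,e_i)$ and $A$ by $C$ with $Ae_i=\sum_m C_{m,i}e_m$. $S_k$ has $(i,j)$ entry $1$ if $i+j=k+1$, else $0$; $J_{\mu,k}=\mu I_k+T_k$ with $T_k$ having $(i,j)$ entry $1$ if $j-i=1$, else $0$. *)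

(* Defs.v *)
(* The complex field is modelled by an arbitrary
   numClosedFieldType C (e.g. algC), conjugation is z^*. *)
From HB Require Import structures.
From mathcomp Require Export all_boot all_order all_algebra.
Set Implicit Arguments. Unset Strict Implicit. Unset Printing Implicit Defensive.
Export Order.TTheory GRing.Theory Num.Theory.
Local Open Scope ring_scope.

(* W = C^n, vectors are row vectors 'rV[C]_n. *)

Definition is_hermitian_form (C : numClosedFieldType) (n : nat)
  (l : 'rV[C]_n -> 'rV[C]_n -> C) : Prop :=
  (forall (a : C) u v w, l (a *: u + v) w = a * l u w + l v w) /\
  (forall (a : C) u v w, l w (a *: u + v) = a^* * l w u + l w v) /\
  (forall v w, l v w = (l w v)^*).

Definition is_nondegenerate (C : numClosedFieldType) (n : nat)
  (l : 'rV[C]_n -> 'rV[C]_n -> C) : Prop :=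
  forall v, (forall w, l v w = 0) -> v = 0.

Definition antilinear (C : numClosedFieldType) (n : nat)
  (A : 'rV[C]_n -> 'rV[C]_n) : Prop :=
  forall (z : C) v w, A (z *: v + w) = z^* *: A v + A w.

Definition l_selfadjoint (C : numClosedFieldType) (n : nat)
  (l : 'rV[C]_n -> 'rV[C]_n -> C) (A : 'rV[C]_n -> 'rV[C]_n) : Prop :=
  forall v w, l (A v) w = l (A w) v.

Definition in_kerpow (C : numClosedFieldType) (n : nat)
  (A : 'rV[C]_n -> 'rV[C]_n) (mu : C) (k : nat) (v : 'rV[C]_n) : Prop :=
  iter k (fun x => A (A x) - mu *: x) v = 0.

(* S_k : (i,j) entry 1 iff i+j = k+1 (1-based), i.e. i+j = k-1 (0-based) *)
Definition Smx (C : numClosedFieldType) (k : nat) : 'M[C]_k :=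
  \matrix_(i < k, j < k) (if (i + j)%N == k.-1 then 1 else 0).

Definition Jmx (C : numClosedFieldType) (mu : C) (k : nat) : 'M[C]_k :=
  \matrix_(i < k, j < k)
     ((if i == j :> nat then mu else 0) + (if j == i.+1 :> nat then 1 else 0)).

(* Main.v *)
Require Import Defs.
From mathcomp Require Import all_boot all_order all_algebra.
From mathcomp Require Import zify ring.
From Stdlib Require Import Classical.
Import GRing.Theory Num.Theory.
Local Open Scope ring_scope.

Lemma iter_comm T (f g : T -> T) k x :
  (forall y, f (g y) = g (f y)) -> iter k f (g x) = g (iter k f x).
Proof. by move=> fg; elim: k => //= k ->; exact: fg. Qed.

Lemma iter_prod T (f g h : T -> T) :
  (forall x, f (g x) = h x) -> (forall x, g (h x) = h (g x)) ->
  forall k z, iter k f (iter k g z) = iter k h z.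
Proof.
move=> fgh gh; elim=> [//|k IH] z.
rewrite [iter k.+1 f _]iterSr [iter k.+1 g _]iterS fgh [iter k.+1 h _]iterSr -IH.
by rewrite (@iter_comm _ g h k z gh).
Qed.

Lemma rank_stab (F : fieldType) n (M : 'M[F]_n) :
  (M ^+ n <= M ^+ (n + n)%N)%MS.
Proof.
pose f k := \rank (M ^+ k).
have sub k : (M ^+ k.+1 <= M ^+ k)%MS by rewrite exprS -mulmxE submxMl.
have dec k : (f k.+1 <= f k)%N by exact: mxrankS.
have st k : f k.+1 = f k -> f k.+2 = f k.+1.
  move=> e; have /eqmxP E : (M ^+ k.+1 == M ^+ k)%MS.
    by rewrite -(mxrank_leqif_eq (sub k)); apply/eqP.
  have E2 := eqmxMr M E.
  by rewrite /f exprSr -mulmxE (eqmx_rank (introT eqmxP E2)) mulmxE -exprSr.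
have st1 k j : f k.+1 = f k -> f (k + j)%N.+1 = f (k + j)%N.
  move=> e; elim: j => [|j IH]; first by rewrite addn0.
  have := st _ IH. rewrite -!addnS. exact.
have st2 k j : f k.+1 = f k -> f (k + j)%N = f k.
  move=> e; elim: j => [|j IH]; first by rewrite addn0.
  by rewrite addnS st1.
have cnt k : (f k + k <= n)%N \/ exists2 j, (j < k)%N & f j.+1 = f j.
  elim: k => [|k [IH|[j jk IH]]]; [by left; rewrite /f expr0 mxrank1 addn0| |by right; exists j => //; exact: ltnW].
  have [e|ne] := eqVneq (f k.+1) (f k); first by right; exists k.
  left; have : (f k.+1 < f k)%N by rewrite ltn_neqAle ne dec.
  lia.
have [H|[j jn fj]] := cnt n.+1; first lia.
have e1 : f n = f j.
  have -> : f n = f (j + (n - j))%N by congr f; lia.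
  exact: st2.
have e2 : f (n + n)%N = f j.
  have -> : f (n + n)%N = f (j + (n + n - j))%N by congr f; lia.
  exact: st2.
have sub2 : (M ^+ (n + n)%N <= M ^+ n)%MS by rewrite exprD -mulmxE submxMl.
by rewrite -(mxrank_leqif_sup sub2) -/(f _) -/(f _) e1 e2.
Qed.

Theorem mainTheorem10 (C : numClosedFieldType) (n : nat)
  (l : 'rV[C]_n -> 'rV[C]_n -> C) (A : 'rV[C]_n -> 'rV[C]_n) (lam : C)
  (s1 : nat) :
  is_hermitian_form l -> is_nondegenerate l ->
  antilinear A -> l_selfadjoint l A ->
  0 < lam ^+ 2 ->
  (exists v : 'rV[C]_n, v != 0 /\ A (A v) = lam ^+ 2 *: v) ->
  (0 < s1)%N ->
  (forall v, in_kerpow A (lam ^+ 2) s1 v <-> in_kerpow A (lam ^+ 2) n v) ->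
  (forall k, (0 < k < s1)%N ->
     ~ (forall v, in_kerpow A (lam ^+ 2) k v <-> in_kerpow A (lam ^+ 2) n v)) ->
  exists B : 'M[C]_(s1, n),
    [/\ row_free B,
        (forall v : 'rV[C]_n, (v <= B)%MS -> (A v <= B)%MS),
        (forall v : 'rV[C]_n, (v <= B)%MS -> in_kerpow A (lam ^+ 2) n v),
        (forall v : 'rV[C]_n, (v <= B)%MS ->
           (forall w : 'rV[C]_n, (w <= B)%MS -> l v w = 0) -> v = 0) &
        exists eps : C, (eps = 1 \/ eps = -1) /\
          (forall i j : 'I_s1, l (row j B) (row i B) = eps * Smx C s1 i j) /\
          (forall i : 'I_s1,
             A (row i B) = \sum_(m < s1) Jmx `|lam| s1 m i *: row m B)].
Proof.
move=> [lZD [rZD lC]] hnd hA hsa hlam [v0 [v0nz v0e]] s1pos hks hmin.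
move: s1 s1pos hks hmin => s s1pos hks hmin.
have l0l w : l 0 w = 0.
  by have := lZD (-1) 0 0 w; rewrite scaleN1r oppr0 addr0 mulN1r addNr.
have lDl u v w : l (u + v) w = l u w + l v w by have := lZD 1 u v w; rewrite scale1r mul1r.
have lZl a u w : l (a *: u) w = a * l u w by have := lZD a u 0 w; rewrite !addr0 l0l addr0.
have lNl u w : l (- u) w = - l u w by rewrite -scaleN1r lZl mulN1r.
have lBl u v w : l (u - v) w = l u w - l v w by rewrite lDl lNl.
have lr0 w : l w 0 = 0 by rewrite lC l0l conjC0.
have lDr u v w : l w (u + v) = l w u + l w v.
  by rewrite (lC w (u + v)) lDl rmorphD (lC w u) (lC w v).
have lZr a u w : l w (a *: u) = a^* * l w u by rewrite (lC w (a *: u)) lZl rmorphM (lC w u).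
have lNr u w : l w (- u) = - l w u by rewrite -scaleN1r lZr rmorphN1 mulN1r.
have lBr u v w : l w (u - v) = l w u - l w v by rewrite lDr lNr.
have A0 : A 0 = 0.
  by have := hA (-1) 0 0; rewrite scaleN1r oppr0 addr0 rmorphN1 scaleN1r addNr.
have AD u v : A (u + v) = A u + A v by have := hA 1 u v; rewrite conjC1 !scale1r.
have AZ a u : A (a *: u) = a^* *: A u by have := hA a u 0; rewrite !addr0 A0 addr0.
have AN u : A (- u) = - A u by rewrite -scaleN1r AZ rmorphN1 scaleN1r.
have AB u v : A (u - v) = A u - A v by rewrite AD AN.
have cB (x y : C) : (x - y)^* = x^* - y^* by rewrite rmorphB.
have cD (x y : C) : (x + y)^* = x^* + y^* by rewrite rmorphD.
have cM (x y : C) : (x * y)^* = x^* * y^* by rewrite rmorphM.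
have cN (x : C) : (- x)^* = - x^* by rewrite rmorphN.
have lamR : lam \is Num.real by rewrite realEsqr ltW.
have lam0 : lam != 0 by apply: contraTneq hlam => ->; rewrite expr0n /= ltxx.
set mu := `|lam|.
have muR : mu^* = mu by apply: conj_Creal; exact: normr_real.
have mu0 : 0 < mu by rewrite normr_gt0.
have mu2 : mu ^+ 2 = lam ^+ 2 by exact: real_normK.
pose N := fun x => A (A x) - lam ^+ 2 *: x.
pose T := fun x => A x - mu *: x.
pose Tm := fun x => A x + mu *: x.
have N0 : N 0 = 0 by rewrite /N !A0 scaler0 subr0.
have ND u v : N (u + v) = N u + N v.
  by rewrite /N !AD; apply/rowP => j; rewrite !mxE; ring.
have NZ a u : N (a *: u) = a *: N u.
  by rewrite /N !AZ conjCK; apply/rowP => j; rewrite !mxE; ring.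
have T0 : T 0 = 0 by rewrite /T !A0 scaler0 subr0.
have TD u v : T (u + v) = T u + T v.
  by rewrite /T !AD; apply/rowP => j; rewrite !mxE; ring.
have TZ r u : r^* = r -> T (r *: u) = r *: T u.
  by move=> rR; rewrite /T !AZ rR; apply/rowP => j; rewrite !mxE; ring.
have Tm0 : Tm 0 = 0 by rewrite /Tm !A0 scaler0 addr0.
have TmD u v : Tm (u + v) = Tm u + Tm v.
  by rewrite /Tm !AD; apply/rowP => j; rewrite !mxE; ring.
have TmZ r u : r^* = r -> Tm (r *: u) = r *: Tm u.
  by move=> rR; rewrite /Tm !AZ rR; apply/rowP => j; rewrite !mxE; ring.
have TTm x : T (Tm x) = N x.
  by rewrite /T /Tm /N AD AZ muR -mu2; apply/rowP => j; rewrite !mxE; ring.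
have TmT x : Tm (T x) = N x.
  by rewrite /T /Tm /N AB AZ muR -mu2; apply/rowP => j; rewrite !mxE; ring.
have TA x : T (A x) = A (T x).
  by rewrite /T AB AZ muR.
have TmN x : Tm (N x) = N (Tm x) by rewrite -TTm TmT.
have TN x : T (N x) = N (T x) by rewrite -TmT TTm.
have TTmk k z : iter k T (iter k Tm z) = iter k N z := @iter_prod _ T Tm N TTm TmN k z.
have TmTk k z : iter k Tm (iter k T z) = iter k N z := @iter_prod _ Tm T N TmT TN k z.
have iN0 k : iter k N 0 = 0 by elim: k => //= k ->.
have iND k u v : iter k N (u + v) = iter k N u + iter k N v by elim: k => //= k ->.
have iNZ k a u : iter k N (a *: u) = a *: iter k N u by elim: k => //= k ->.
have iT0 k : iter k T 0 = 0 by elim: k => //= k ->.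
have iTD k u v : iter k T (u + v) = iter k T u + iter k T v by elim: k => //= k ->.
have iTZ k r u : r^* = r -> iter k T (r *: u) = r *: iter k T u.
  by move=> rR; elim: k => //= k ->; rewrite TZ.
have iTm0 k : iter k Tm 0 = 0 by elim: k => //= k ->.
have iTA k x : iter k T (A x) = A (iter k T x) by apply: iter_comm.
have iTTm k x : iter k T (Tm x) = Tm (iter k T x).
  by apply: iter_comm => y; rewrite TTm TmT.
have iTT a k x : iter a T (iter k T x) = iter k T (iter a T x).
  by rewrite -!iterD addnC.
have mu2n0 : mu * 2 != 0 by rewrite mulf_neq0 ?pnatr_eq0 // lt0r_neq0.
have gam m : forall a b x y, (a + b <= m)%N -> iter a T x = 0 ->
    iter b T y = 0 -> (l x y)^* = l x y.
  elim: m => [|m IH] a b x y hab hx hy.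
    have a0 : a = 0%N by lia.
    by move: hx; rewrite a0 /= => ->; rewrite l0l conjC0.
  case: a hab hx => [|a] hab hx; first by move: hx => /= ->; rewrite l0l conjC0.
  case: b hab hy => [|b] hab hy; first by move: hy => /= ->; rewrite lr0 conjC0.
  have hx' := hx; have hy' := hy; rewrite iterSr in hx'; rewrite iterSr in hy'.
  have h1 := IH a b.+1 (T x) y ltac:(lia) hx' hy.
  have h2 := IH a.+1 b x (T y) ltac:(lia) hx hy'.
  move: h1 h2; rewrite /T lBl lZl lBr lZr muR (lC x (A y)) (hsa y x).
  set P := l (A x) y; set L := l x y.
  rewrite !cB !cM conjCK muR => h1 h2.
  have e : mu * 2 * (L^* - L) =
     (P - mu * L - (P^* - mu * L^*)) + (P^* - mu * L - (P - mu * L^*)) by ring.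
  rewrite -h1 -h2 !subrr addr0 in e.
  by apply/eqP; rewrite -subr_eq0; move/eqP: e; rewrite mulf_eq0 (negbTE mu2n0).
have Tsa a b x y : iter a T x = 0 -> iter b T y = 0 -> l (T x) y = l x (T y).
  move=> hx hy; have hAx : iter a T (A x) = 0 by rewrite iTA hx A0.
  have := gam _ _ _ _ _ (leqnn _) hAx hy.
  by rewrite /T lBl lZl lBr lZr muR (lC x (A y)) (hsa y x) => ->.
have Tsak a b k x y : iter a T x = 0 -> iter b T y = 0 ->
    l (iter k T x) y = l x (iter k T y).
  move=> hx; elim: k y => [//|k IH] y hy.
  have h1 : iter a T (iter k T x) = 0 by rewrite iTT hx iT0.
  have h2 : iter b T (T y) = 0 by rewrite -iterSr iterS hy T0.
  by rewrite iterS (Tsa a b _ _ h1 hy) (IH _ h2) -iterSr.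
have lN x y : l (N x) y = l x (N y).
  rewrite /N lBl lZl lBr lZr (hsa (A x) y) (lC x (A (A y))) (hsa (A y) x).
  by rewrite -lC conj_Creal // rpredX.
have lNk k x y : l (iter k N x) y = l x (iter k N y).
  by elim: k y => [//|k IH] y; rewrite iterS lN IH -iterSr.
have kerE k v : in_kerpow A (lam ^+ 2) k v = (iter k N v = 0) by [].
have n0 : (0 < n)%N.
  rewrite lt0n; apply/eqP => n0; move/eqP: v0nz; apply; apply/rowP => -[i hi].
  have : (i < 0)%N by rewrite -n0.
  by rewrite ltn0.
have sn : (s <= n)%N.
  rewrite leqNgt; apply/negP => ns.
  have := hmin n; rewrite n0 ns => /(_ isT); apply => v; exact: iff_refl.
have sS : s.-1.+1 = s by rewrite prednK.
have [v [vs vs1]] : exists v, iter s N v = 0 /\ iter s.-1 N v != 0.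
  have [s1e|s1gt] := eqVneq s 1%N.
    by exists v0; rewrite s1e /=; split => //; rewrite /N v0e subrr.
  apply: NNPP => H; apply: (hmin s.-1); first by lia.
  move=> v; rewrite !kerE; split => hv.
    by apply/hks; rewrite kerE -sS iterS hv N0.
  have hv' : iter s N v = 0 by apply/hks.
  case: (eqVneq (iter s.-1 N v) 0) => // ne; exfalso; apply: H; by exists v.
have [v1 [v1s v1ne]] : exists v1, iter s N v1 = 0 /\ Tm (iter s.-1 N v1) != 0.
  set w := iter s.-1 N v.
  have [Tw0|Twn] := eqVneq (Tm w) 0; last by exists v.
  exists ('i *: v); split; first by rewrite iNZ vs scaler0.
  rewrite iNZ -/w.
  have Aw : A w = - (mu *: w) by apply/eqP; rewrite -addr_eq0; apply/eqP.
  have -> : Tm ('i *: w) = ('i * mu * 2) *: w.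
    by rewrite /Tm AZ Aw conjCi; apply/rowP => j; rewrite !mxE; ring.
  by rewrite scaler_eq0 negb_or vs1 andbT -mulrA mulf_neq0 ?(@neq0Ci C).
pose x := iter s Tm v1.
have hxs : iter s T x = 0 by rewrite /x TTmk.
have exTm j z : iter j.+1 Tm z = Tm (iter j Tm z) by [].
pose u := iter s.-1 T x.
have hu : u = Tm (iter s.-1 N v1) by rewrite /u /x -sS exTm iTTm TTmk.
have unz : u != 0 by rewrite hu.
have Tu0 : T u = 0 by rewrite /u -iterS sS.
have Nu0 : N u = 0 by rewrite -TmT Tu0 Tm0.
have Au : A u = mu *: u by apply: subr0_eq; exact: Tu0.
pose M := \matrix_(i < n, j < n) N (delta_mx 0 i) 0 j.
have NM w : N w = w *m M.
  rewrite mulmx_sum_row {1}(row_sum_delta w) (big_morph N ND N0).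
  apply: eq_bigr => i _; rewrite NZ; congr (_ *: _).
  by apply/rowP => j; rewrite !mxE.
have iNM k w : iter k N w = w *m M ^+ k.
  elim: k => [|k IH]; first by rewrite expr0 mulmx1.
  by rewrite iterS IH NM -mulmxA mulmxE -exprSr.
have [k [kn luk]] : exists k, iter n N k = 0 /\ l u k != 0.
  have [w lw] : exists w, l u w != 0.
    apply: NNPP => H; move/eqP: unz; apply; apply: hnd => w.
    case: (eqVneq (l u w) 0) => // ne; exfalso; apply: H; by exists w.
  have /submxP [D hD] : (w *m M ^+ n <= M ^+ (n + n)%N)%MS.
    exact: (submx_trans (submxMl w (M ^+ n)) (@rank_stab _ _ M)).
  exists (w - D *m M ^+ n); split.
    by rewrite iNM mulmxBl hD -mulmxA mulmxE -exprD subrr.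
  have e : l u w = l u (w - D *m M ^+ n) + l u (D *m M ^+ n) by rewrite lBr subrK.
  have : l u (D *m M ^+ n) = 0.
    have h : iter n.-1.+1 N u = 0 by rewrite iterSr Nu0 iN0.
    by rewrite -iNM -lNk (prednK n0) in h *; rewrite h l0l.
  by move: lw; rewrite e => /[swap] ->; rewrite addr0.
have ks : iter s N k = 0 by apply/hks; rewrite kerE.
pose rho z := l u z + (l u z)^*.
have rhoR z : (rho z)^* = rho z by rewrite /rho cD conjCK addrC.
have luTm z : l u (Tm z) = mu * rho z.
  by rewrite /Tm lDr lZr muR (lC u (A z)) (hsa z u) Au lZl cM muR /rho; ring.
have rhoTm z : rho (Tm z) = mu * 2 * rho z.
  by rewrite {1}/rho luTm cM muR rhoR; ring.
have rhoTmk j z : rho (iter j Tm z) = (mu * 2) ^+ j * rho z.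
  elim: j => [|j IH]; first by rewrite expr0 mul1r.
  by rewrite iterS rhoTm IH exprS mulrA.
have [k1 [k1s rk1]] : exists k1, iter s N k1 = 0 /\ rho k1 != 0.
  have [rk|rk] := eqVneq (rho k) 0; last by exists k.
  exists ('i *: k); split; first by rewrite iNZ ks scaler0.
  apply: contra luk => /eqP rik.
  have e : rho ('i *: k) = - 'i * l u k + 'i * (l u k)^*.
    by rewrite /rho lZr cM conjCK conjCi; ring.
  have : 'i * 2 * l u k = 0.
    transitivity ('i * rho k - rho ('i *: k)); first by rewrite e /rho; ring.
    by rewrite rk rik mulr0 subrr.
  by move/eqP; rewrite mulf_eq0 mulf_eq0 (negbTE (@neq0Ci C)) pnatr_eq0.
pose y0 := iter s Tm k1.
have y0s : iter s T y0 = 0 by rewrite /y0 TTmk.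
have luy0 : l u y0 != 0.
  rewrite /y0 -sS exTm luTm rhoTmk.
  by apply: mulf_neq0; [exact: lt0r_neq0 | apply: mulf_neq0 => //; exact: expf_neq0].
pose phi p q := l (iter s.-1 T p) q.
have phisym p q : iter s T p = 0 -> iter s T q = 0 -> phi p q = phi q p.
  move=> hp hq; rewrite /phi (Tsak s s _ _ _ hp hq) lC.
  by apply: (gam _ s s) => //; rewrite iTT hq iT0.
have [y1 [y1s cy1]] : exists y, iter s T y = 0 /\ l (iter s.-1 T y) y != 0.
  have [h1|h1] := eqVneq (phi x x) 0; last by exists x.
  have [h2|h2] := eqVneq (phi y0 y0) 0; last by exists y0.
  exists (x + y0); split; first by rewrite iTD hxs y0s addr0.
  rewrite iTD lDl !lDr -/(phi x x) -/(phi y0 y0) -/(phi x y0) -/(phi y0 x) h1 h2.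
  rewrite (phisym y0 x) // add0r addr0 -mulr2n mulrn_eq0 /=.
  by [].
have cV (z : C) : (z^-1)^* = (z^*)^-1 by rewrite fmorphV.
pose mom q y := l (iter q T y) y.
have hK q z : iter s T z = 0 -> iter s T (iter q T z) = 0.
  by move=> hz; rewrite iTT hz iT0.
have momR q y : iter s T y = 0 -> (mom q y)^* = mom q y.
  by move=> hy; apply: (gam _ s s) => //; exact: hK.
have momhi q y : iter s T y = 0 -> (s <= q)%N -> mom q y = 0.
  by move=> hy sk; rewrite /mom -(subnK sk) iterD hy iT0 l0l.
have momE q j a y : iter s T y = 0 -> a^* = a ->
   mom q (y + a *: iter j T y) = mom q y + a * mom (q + j)%N y
      + a * mom (q + j)%N y + a * a * mom (q + j + j)%N y.
  move=> hy aR; rewrite /mom iTD iTZ // lDl !lDr !lZl !lZr aR.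
  rewrite -(Tsak s s j (iter q T y) y) ?hK //.
  rewrite -(Tsak s s j (iter q T (iter j T y)) y) ?hK //.
  have e1 : iter j T (iter q T y) = iter (q + j)%N T y by rewrite -iterD addnC.
  have e2 : iter q T (iter j T y) = iter (q + j)%N T y by rewrite -iterD.
  have e3 : iter j T (iter (q + j)%N T y) = iter (q + j + j)%N T y.
    by rewrite -iterD addnC.
  rewrite e1 e2 e3; ring.
have main t : (t <= s.-1)%N -> exists y, [/\ iter s T y = 0, mom s.-1 y != 0 &
      forall q, (s.-1 - t <= q < s.-1)%N -> mom q y = 0].
  elim: t => [_|t IH ts].
    exists y1; split => // q. move=> /andP[h1 h2]. rewrite subn0 in h1. exfalso. move: h1 h2. clear. lia.
  have [y [hy cy hz]] := IH (ltnW ts).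
  set c := mom s.-1 y.
  pose k0 := (s.-1 - t.+1)%N.
  pose a := - mom k0 y / (c * 2).
  have aR : a^* = a.
    by rewrite /a cM cN cV cM (momR _ _ hy) (momR _ _ hy) conjC_nat.
  exists (y + a *: iter t.+1 T y); split.
  - by rewrite iTD iTZ // iTT hy iT0 scaler0 addr0.
  - have h1 : (s <= s.-1 + t.+1)%N by move: sS; clear; lia.
    have h2 : (s <= s.-1 + t.+1 + t.+1)%N by move: sS; clear; lia.
    by rewrite momE // (momhi _ y hy h1) (momhi _ y hy h2) !mulr0 !addr0.
  - move=> q /andP [q1 q2]; rewrite momE //.
    have h3 : (s <= q + t.+1 + t.+1)%N by move: sS q1 q2 ts; clear; lia.
    rewrite (momhi _ y hy h3).
    have [kk0|kk0] := eqVneq q k0.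
      have -> : (q + t.+1)%N = s.-1 by rewrite kk0 /k0; move: ts; clear; lia.
      rewrite kk0 /a -/c. field.
      exact: cy.
    have kk : q <> k0 by apply/eqP.
    rewrite /k0 in kk.
    have h4 : (s <= q + t.+1)%N by move: sS q1 q2 ts kk; clear; lia.
    have h5 : (s.-1 - t <= q < s.-1)%N by move: sS q1 q2 ts kk; clear; lia.
    by rewrite (momhi _ y hy h4) hz // !mulr0 !addr0.
have [y [hy cy hz]] := main s.-1 (leqnn _).
set c := mom s.-1 y in cy.
have cR : c \is Num.real by rewrite CrealE; apply/eqP; exact: momR.
pose r := (sqrtC `|c|)^-1.
have rR : r^* = r.
  apply: conj_Creal; rewrite /r rpredV; apply: ger0_real.
  by rewrite sqrtC_ge0 normr_ge0.
pose eps := c / `|c|.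
have eps1 : eps = 1 \/ eps = -1.
  move: cR; rewrite realE => /orP [c0|c0].
    by left; rewrite /eps ger0_norm // divff.
  by right; rewrite /eps ler0_norm // invrN mulrN divff.
have epsn0 : eps != 0 by case: eps1 => ->; rewrite ?oppr_eq0 oner_eq0.
pose y2 := r *: y.
have y2s : iter s T y2 = 0 by rewrite /y2 iTZ // hy scaler0.
have momy2 q : mom q y2 = r * r * mom q y.
  by rewrite /mom /y2 iTZ // lZl lZr rR mulrA.
have rr : r * r = `|c|^-1 by rewrite /r -invfM -expr2 sqrtCK.
have mom_s : mom s.-1 y2 = eps by rewrite momy2 rr /eps -/c mulrC.
have mom_lo q : (q < s.-1)%N -> mom q y2 = 0.
  by move=> hq; rewrite momy2 hz ?mulr0 // subnn leq0n hq.
pose e (i : nat) := iter (s.-1 - i)%N T y2.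
pose B := \matrix_(i < s) e i.
have rowB (i : 'I_s) : row i B = e i by rewrite rowK.
have gram (i j : 'I_s) : l (e j) (e i) = eps * Smx C s i j.
  rewrite /e -(Tsak s s (s.-1 - i)%N _ _ (hK _ _ y2s) y2s) -iterD -/(mom _ y2).
  rewrite /Smx mxE.
  have hi := ltn_ord i; have hj := ltn_ord j.
  case: ifP => h.
    have -> : (s.-1 - i + (s.-1 - j))%N = s.-1.
      by move/eqP: h; move: hi hj sS; clear; lia.
    by rewrite mom_s mulr1.
  move/negbT/eqP: h => h; rewrite mulr0.
  have [lt|ge] := ltnP (s.-1 - i + (s.-1 - j))%N s.-1; first exact: mom_lo.
  apply: momhi => //; move: hi hj sS h ge; clear; lia.
have AT z : A z = T z + mu *: z by rewrite /T subrK.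
have act (i : 'I_s) : A (e i) = \sum_(m < s) Jmx mu s m i *: e m.
  under eq_bigr => m _ do rewrite /Jmx mxE scalerDl.
  rewrite big_split /= AT addrC; congr (_ + _); last first.
    rewrite (bigD1 i) //= eqxx big1 ?addr0 // => m mi.
    by rewrite ifN ?scale0r.
  case: i => [[|i] hi] /=.
    rewrite big1 => [|m _]; last by rewrite scale0r.
    by rewrite /e subn0 -iterS sS.
  have hi' : (i < s)%N by apply: ltnW.
  rewrite (bigD1 (Ordinal hi')) //= eqxx scale1r big1 ?addr0.
    rewrite /e -iterS; congr (iter _ T y2).
    by move: hi sS; clear; lia.
  move=> m mi; rewrite ifN ?scale0r //.
  apply: contra mi => /eqP [] h; apply/eqP; apply: val_inj => /=; by rewrite h.
have coef (d : 'rV_s) (j : 'I_s) : l (d *m B) (e j) = eps * d 0 (rev_ord j).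
  rewrite mulmx_sum_row (big_morph (fun z => l z (e j)) (fun a b => lDl a b (e j)) (l0l (e j))).
  under eq_bigr => i _ do rewrite rowB lZl gram.
  rewrite (bigD1 (rev_ord j)) //= big1 ?addr0.
    rewrite /Smx mxE /=.
    have -> : (j + (s - j.+1))%N == s.-1.
      by apply/eqP; move: (ltn_ord j) sS; clear; lia.
    by rewrite mulr1 mulrC.
  move=> i ij; rewrite /Smx mxE ifN ?mulr0 ?mul0r //.
  apply: contra ij => /eqP h; apply/eqP; apply: val_inj => /=.
  by move: h (ltn_ord i) (ltn_ord j) sS; clear; lia.
have d0 (d : 'rV_s) : (forall j : 'I_s, l (d *m B) (e j) = 0) -> d = 0.
  move=> hd; apply/rowP => i; rewrite mxE.
  have := coef d (rev_ord i); rewrite rev_ordK hd => /esym/eqP.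
  by rewrite mulf_eq0 (negbTE epsn0) => /eqP.
have kerK z : iter s T z = 0 -> iter n N z = 0.
  move=> hz'; have e' : iter n T z = iter (n - s)%N T (iter s T z).
    by rewrite -iterD subnK.
  by rewrite -TmTk e' hz' iT0 iTm0.
exists B; split.
- apply: inj_row_free => d hd; apply: d0 => j; by rewrite hd l0l.
- move=> vv /submxP [d ->]; rewrite mulmx_sum_row (big_morph A AD A0).
  apply: summx_sub => i _; rewrite AZ rowB act; apply: scalemx_sub.
  apply: summx_sub => m _; apply: scalemx_sub; rewrite -rowB; exact: row_sub.
- move=> vv /submxP [d ->]; rewrite kerE mulmx_sum_row.
  rewrite (big_morph (iter n N) (iND n) (iN0 n)) big1 // => i _.
  by rewrite iNZ rowB kerK ?scaler0 // /e hK.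
- move=> vv /submxP [d ->] hv; rewrite (d0 d) ?mul0mx // => j.
  by apply: hv; rewrite -rowB row_sub.
- exists eps; split => //; split => [i j|i]; first by rewrite !rowB gram.
  by rewrite rowB act; apply: eq_bigr => m _; rewrite rowB.
Qed.
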